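(* If $K$ is a simply connected (pathwise connected) poset, then every $\mathrm{C}^*$-net bundle $(\mathcal A,\jmath)_K$ over $K$ is trivial.
   Context: Poset homotopy: $0$-simplices are elements of $K$; an $n$-simplex $x$ ($n\ge1$) consists of $(n-1)$-simplices $\partial_0x,\dots,\partial_nx$ and a support $|x|\in K$ with $|\partial_ix|\le|x|$. Paths are concatenations $b_n*\cdots*b_1$ of $1$-simplices with $\partial_0b_i=\partial_1b_{i+1}$; $K$ is pathwise connected if any two elements are joined by a path; homotopy is generated by replacing consecutive $\partial_0c*\partial_2c$ by $\partial_1c$ or conversely ($c$ a $2$-simplex); $K$ is simply connected if the group $\pi_1^o(K)$ of homotopy classes of loops at $o$ is trivial. A $\mathrm{C}^*$-net bundle $(\mathcal A,\jmath)_K$ assigns unital $\mathrm{C}^*$-algebras $\mathcal A_o$ and ${}^*$-isomorphisms $\jmath_{oa}:\mathcal A_a\to\mathcal A_o$ for $a\le o$ with $\jmath_{oa}\circ\jmath_{ae}=\jmath_{oe}$. It is trivial if there are ${}^*$-isomorphisms $\phi_o:\mathcal A_o\to\mathrm A$ onto a fixed $\mathrm{C}^*$-algebra with $\phi_o\circ\jmath_{oa}=\phi_a$ for all $a\le o$ (i.e. it is isomorphic to the constant net bundle with fibre $\mathrm A$). *)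

(* Defs.v *)
From HB Require Import structures.
From mathcomp Require Import all_boot all_order all_algebra.
From mathcomp Require Import complex.
From mathcomp Require Import reals.
From Stdlib Require Import Relation_Operators.
Set Implicit Arguments. Unset Strict Implicit. Unset Printing Implicit Defensive.
Import Order.TTheory GRing.Theory Num.Theory.
Local Open Scope ring_scope.

Section PosetHomotopy.
Context {d : Order.disp_t} (K : porderType d).

(* A 1-simplex: boundaries d0 (end), d1 (start) and support. *)
Record simplex1 := Simplex1 {
  s1_d0 : K; s1_d1 : K; s1_supp : K;
  s1_le0 : (s1_d0 <= s1_supp)%O;
  s1_le1 : (s1_d1 <= s1_supp)%O }.

(* A 2-simplex: three 1-simplices and a support, satisfying the
   simplicial identities  d_i d_j = d_{j-1} d_i  (i < j). *)
Record simplex2 := Simplex2 {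
  s2_d0 : simplex1; s2_d1 : simplex1; s2_d2 : simplex1; s2_supp : K;
  s2_le0 : (s1_supp s2_d0 <= s2_supp)%O;
  s2_le1 : (s1_supp s2_d1 <= s2_supp)%O;
  s2_le2 : (s1_supp s2_d2 <= s2_supp)%O;
  s2_id01 : s1_d0 s2_d1 = s1_d0 s2_d0;
  s2_id02 : s1_d0 s2_d2 = s1_d1 s2_d0;
  s2_id12 : s1_d1 s2_d2 = s1_d1 s2_d1 }.

Definition deg1 (o : K) : simplex1 := @Simplex1 o o o (lexx o) (lexx o).

(* A path  b_n * ... * b_1  is represented by the list [:: b_n; ...; b_1];
   consecutive condition  d0 b_i = d1 b_{i+1}. *)
Fixpoint chain (l : seq simplex1) : Prop :=
  match l with
  | x :: ((y :: _) as t) => s1_d1 x = s1_d0 y /\ chain t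
  | _ => True
  end.

Definition is_path_from_to (a o : K) (l : seq simplex1) : Prop :=
  chain l /\ exists b l', l = b :: l' /\ s1_d0 b = o /\ s1_d1 (last b l') = a.

Definition is_loop (o : K) (l : seq simplex1) : Prop := is_path_from_to o o l.

Definition pathwise_connected : Prop :=
  forall a o : K, exists l, is_path_from_to a o l.

Definition htp_step (p q : seq simplex1) : Prop :=
  exists (l r : seq simplex1) (c : simplex2),
    p = l ++ [:: s2_d0 c; s2_d2 c] ++ r /\ q = l ++ [:: s2_d1 c] ++ r.

Definition homotopic : seq simplex1 -> seq simplex1 -> Prop :=
  clos_refl_sym_trans (seq simplex1) htp_step.

Definition pi1_trivial (o : K) : Prop :=
  forall l, is_loop o l -> homotopic l [:: deg1 o].

Definition simply_connected : Prop :=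
  pathwise_connected /\ forall o : K, pi1_trivial o.

End PosetHomotopy.

Definition normc {R : realType} (z : R[i]) : R := ComplexField.Normc.normc z.

Record CStarAlg (R : realType) := CStarAlgMk {
  cs_car :> lmodType R[i];
  cs_mul : cs_car -> cs_car -> cs_car;
  cs_one : cs_car;
  cs_star : cs_car -> cs_car;
  cs_norm : cs_car -> R;
  cs_mulA : forall x y z, cs_mul x (cs_mul y z) = cs_mul (cs_mul x y) z;
  cs_mul1l : forall x, cs_mul cs_one x = x;
  cs_mul1r : forall x, cs_mul x cs_one = x;
  cs_mulDl : forall x y z, cs_mul (x + y) z = cs_mul x z + cs_mul y z;
  cs_mulDr : forall x y z, cs_mul x (y + z) = cs_mul x y + cs_mul x z;
  cs_scaleAl : forall (a : R[i]) x y, a *: cs_mul x y = cs_mul (a *: x) y;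
  cs_scaleAr : forall (a : R[i]) x y, a *: cs_mul x y = cs_mul x (a *: y);
  cs_starK : forall x, cs_star (cs_star x) = x;
  cs_starD : forall x y, cs_star (x + y) = cs_star x + cs_star y;
  cs_starZ : forall (a : R[i]) x, cs_star (a *: x) = conjc a *: cs_star x;
  cs_starM : forall x y, cs_star (cs_mul x y) = cs_mul (cs_star y) (cs_star x);
  cs_norm_eq0 : forall x, cs_norm x = 0 -> x = 0;
  cs_normD : forall x y, cs_norm (x + y) <= cs_norm x + cs_norm y;
  cs_normZ : forall (a : R[i]) x, cs_norm (a *: x) = normc a * cs_norm x;
  cs_normM : forall x y, cs_norm (cs_mul x y) <= cs_norm x * cs_norm y;
  cs_normC : forall x, cs_norm (cs_mul (cs_star x) x) = cs_norm x ^+ 2;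
  cs_complete : forall u : nat -> cs_car,
    (forall e : R, 0 < e -> exists N, forall m n, (N <= m)%N -> (N <= n)%N ->
        cs_norm (u m - u n) < e) ->
    exists l, forall e : R, 0 < e -> exists N, forall n, (N <= n)%N ->
        cs_norm (u n - l) < e }.

Definition star_hom {R : realType} (A B : CStarAlg R) (f : A -> B) : Prop :=
  [/\ forall x y, f (x + y) = f x + f y,
      forall (a : R[i]) x, f (a *: x) = a *: f x,
      forall x y, f (cs_mul x y) = cs_mul (f x) (f y),
      f (cs_one A) = cs_one B &
      forall x, f (cs_star x) = cs_star (f x)].

Definition star_iso {R : realType} (A B : CStarAlg R) (f : A -> B) : Prop :=
  star_hom f /\ bijective f.

Record net_bundle (R : realType) {d : Order.disp_t} (K : porderType d) :=
  NetBundle {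
  nb_alg : K -> CStarAlg R;
  nb_j : forall a o : K, (a <= o)%O -> nb_alg a -> nb_alg o;
  nb_iso : forall (a o : K) (h : (a <= o)%O), star_iso (nb_j h);
  nb_comp : forall (e a o : K) (hoa : (a <= o)%O) (hae : (e <= a)%O)
      (hoe : (e <= o)%O) (x : nb_alg e),
      nb_j hoa (nb_j hae x) = nb_j hoe x }.

(* Triviality: isomorphic to a constant net bundle. *)
Definition trivial_bundle (R : realType) {d : Order.disp_t} (K : porderType d)
    (N : net_bundle R K) : Prop :=
  exists (B : CStarAlg R) (phi : forall o : K, nb_alg N o -> B),
    (forall o, star_iso (phi o)) /\
    (forall (a o : K) (h : (a <= o)%O) (x : nb_alg N a),
        phi o (nb_j h x) = phi a x).

(* Main.v *)
Require Import Defs.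
From HB Require Import structures.
From mathcomp Require Import all_boot all_order all_algebra.
From mathcomp Require Import complex reals.
From Stdlib Require Import Relation_Operators Eqdep_dec ClassicalEpsilon Classical.
Unset Printing Implicit Defensive.
Import Order.TTheory GRing.Theory Num.Theory.

Local Open Scope ring_scope.

Definition zeroCS (R : realType) : CStarAlg R.
Proof.
refine (@CStarAlgMk R ('rV[R[i]]_0) (fun _ _ => 0) 0 (fun _ => 0) (fun _ => 0)
  _ _ _ _ _ _ _ _ _ _ _ _ _ _ _ _ _);
  intros; rewrite ?thinmx0 //; rewrite ?mulr0 ?addr0 ?expr0n //.
exists 0 => e e0; exists 0%N => n _; exact e0.
Defined.
Section Main.
Context {R : realType} {d : Order.disp_t} {K : porderType d} {N : net_bundle R K}.
Local Notation A := (nb_alg N).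
Local Notation j := (@nb_j _ _ _ N _ _).

Definition SS := {a : K & A a}.

Lemma eqS {a : K} {x y : A a} : existT A a x = existT A a y -> x = y.
Proof. exact: (inj_pair2_eq_dec K (@eq_comparable K)). Qed.

Lemma j_inj {a o : K} (h : (a <= o)%O) : injective (j h).
Proof. by case: (nb_iso N h) => _ /bij_inj. Qed.

Lemma j_surj {a o : K} (h : (a <= o)%O) y : exists x, j h x = y.
Proof. case: (nb_iso N h) => _ [g _ gK]; by exists (g y); rewrite gK. Qed.

Lemma j_id {o : K} (h : (o <= o)%O) x : j h x = x.
Proof. have := j_inj h; apply; by rewrite (nb_comp h h h). Qed.

Definition Lift (s : K) (P : SS) (z : A s) :=
  exists h : (projT1 P <= s)%O, j h (projT2 P) = z.

Lemma Lift_uniq {s P z z'} : Lift s P z -> Lift s P z' -> z = z'.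
Proof. by move=> [h <-] [h' <-]; rewrite (bool_irrelevance h h'). Qed.

Lemma Lift_up {s P z t} (hst : (s <= t)%O) : Lift s P z -> Lift t P (j hst z).
Proof. move=> [h <-]; exists (le_trans h hst); by rewrite (nb_comp hst h (le_trans h hst)). Qed.

Lemma Lift_ex {s P} : (projT1 P <= s)%O -> exists z, Lift s P z.
Proof. move=> h; exists (j h (projT2 P)); by exists h. Qed.

Definition Same s P Q := exists z, Lift s P z /\ Lift s Q z.

Lemma Same_up {s t P Q} : (s <= t)%O -> Same s P Q -> Same t P Q.
Proof. move=> hst [z [h1 h2]]; exists (j hst z); split; exact: Lift_up. Qed.

Lemma Same_trans {s P M Q} : Same s P M -> Same s M Q -> Same s P Q.
Proof.
move=> [z [h1 h2]] [z' [h3 h4]]; exists z; split => //.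
by rewrite (Lift_uniq h2 h3).
Qed.

Lemma Same_sym {s P Q} : Same s P Q -> Same s Q P.
Proof. by move=> [z [h1 h2]]; exists z. Qed.

Lemma Same_down {s t P Q} : (s <= t)%O -> (projT1 P <= s)%O -> (projT1 Q <= s)%O ->
  Same t P Q -> Same s P Q.
Proof.
move=> hst hP hQ [w [hw1 hw2]].
have [z Hz] := Lift_ex hP; have [z' Hz'] := Lift_ex hQ.
exists z; split => //.
suff -> : z = z' by [].
apply: (j_inj hst).
by rewrite (Lift_uniq (Lift_up hst Hz) hw1) (Lift_uniq (Lift_up hst Hz') hw2).
Qed.

Definition St (b : simplex1 K) (P Q : SS) :=
  [/\ projT1 P = s1_d1 b, projT1 Q = s1_d0 b & Same (s1_supp b) P Q].

Fixpoint Tr (l : seq (simplex1 K)) (P Q : SS) : Prop :=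
  match l with
  | [::] => P = Q
  | b :: l' => exists M, Tr l' P M /\ St b M Q
  end.

Lemma St_ex {b P} : projT1 P = s1_d1 b -> exists Q, St b P Q.
Proof.
move=> e.
have hP : (projT1 P <= s1_supp b)%O by rewrite e; exact: s1_le1.
have [z Hz] := Lift_ex hP.
have [y Hy] := j_surj (s1_le0 b) z.
exists (existT A (s1_d0 b) y); split => //.
by exists z; split => //; exists (s1_le0 b).
Qed.

Definition flip (b : simplex1 K) : simplex1 K :=
  @Simplex1 _ K (s1_d1 b) (s1_d0 b) (s1_supp b) (s1_le1 b) (s1_le0 b).

Lemma St_flip {b P Q} : St b P Q -> St (flip b) Q P.
Proof. by case=> e1 e2 /Same_sym H; split. Qed.

Lemma Tr1 {b P Q} : Tr [:: b] P Q <-> St b P Q.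
Proof. by split => [[M [<- H]] | H] //; exists P. Qed.

Lemma Tr_cat {l m P Q} : Tr (l ++ m) P Q <-> exists M, Tr m P M /\ Tr l M Q.
Proof.
elim: l Q => [|b l IH] Q /=.
  by split => [H | [M [H <-]]] //; exists Q.
split.
  move=> [M' [/IH [M [H1 H2]] H3]]; exists M; split => //; by exists M'.
move=> [M [H1 [M' [H2 H3]]]]; exists M'; split => //; apply/IH; by exists M.
Qed.

Lemma Tr_rev {l P Q} : Tr l P Q -> Tr (rev (map flip l)) Q P.
Proof.
elim: l P Q => [|b l IH] P Q /=; first by move=> ->.
move=> [M [H1 H2]]; rewrite rev_cons -cats1; apply/Tr_cat.
exists M; split; first exact/Tr1/St_flip.
exact: IH.
Qed.

Lemma Tr_path {l P Q} : Tr l P Q ->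
  match l with
  | [::] => P = Q
  | b :: l' => chain (b :: l') /\ projT1 Q = s1_d0 b /\ projT1 P = s1_d1 (last b l')
  end.
Proof.
elim: l Q => [|b l IH] Q //= [M [H1 [e1 e2 _]]].
move: (IH M H1); case: l {IH} H1 => [|b' l'] H1.
  by move=> ->.
move=> [c [e3 e4]]; split; last by split.
simpl; split => //; by rewrite -e1 e3.
Qed.

Lemma Tr_2simp (c : simplex2 K) P Q :
  Tr [:: s2_d0 c; s2_d2 c] P Q <-> Tr [:: s2_d1 c] P Q.
Proof.
split.
  move=> [M [/Tr1 [e1 e2 S1] [e3 e4 S2]]]; apply/Tr1.
  have eP : projT1 P = s1_d1 (s2_d1 c) by rewrite e1 (s2_id12 c).
  have eQ : projT1 Q = s1_d0 (s2_d1 c) by rewrite e4 (s2_id01 c).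
  split => //.
  apply: (Same_down (s2_le1 c)).
  - by rewrite eP; exact: s1_le1.
  - by rewrite eQ; exact: s1_le0.
  exact: (Same_trans (Same_up (s2_le2 c) S1) (Same_up (s2_le0 c) S2)).
move=> /Tr1 [e1 e2 S].
have [z [Lz1 Lz2]] := Same_up (s2_le1 c) S.
have hm : (s1_d0 (s2_d2 c) <= s2_supp c)%O := le_trans (s1_le0 (s2_d2 c)) (s2_le2 c).
have [m Hm] := j_surj hm z.
set M := existT A (s1_d0 (s2_d2 c)) m.
have LM : Lift (s2_supp c) M z by exists hm.
exists M; split.
  apply/Tr1; split => //; first by rewrite e1 (s2_id12 c).
  apply: (Same_down (s2_le2 c)) => //.
  - by rewrite e1 -(s2_id12 c); exact: s1_le1.
  - exact: s1_le0.
  by exists z.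
split => //.
- exact: (s2_id02 c).
- by rewrite e2 (s2_id01 c).
apply: (Same_down (s2_le0 c)) => //.
- rewrite /= (s2_id02 c); exact: s1_le1.
- by rewrite e2 (s2_id01 c); exact: s1_le0.
by exists z.
Qed.

Lemma Tr_htp p q : homotopic p q -> forall P Q, Tr p P Q <-> Tr q P Q.
Proof.
rewrite /homotopic => H; induction H as [p q [l [r [c [-> ->]]]]| p | p q H IH | p q s H1 IH1 H2 IH2] => P Q.
- split => /Tr_cat [M [/Tr_cat [M' [H1 H2]] H3]]; apply/Tr_cat; exists M; split => //;
   apply/Tr_cat; exists M'; split => //; exact/Tr_2simp.
- by [].
- by rewrite IH.
- by rewrite IH1 IH2.
Qed.

Lemma Tr_loop (Hpi : forall o : K, pi1_trivial o) l P Q o :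
  Tr l P Q -> projT1 P = o -> projT1 Q = o -> P = Q.
Proof.
move=> H eP eQ.
have := Tr_path H; case: l H => [|b l'] H; first by [].
move=> [hc [e1 e2]].
have hl : is_loop o (b :: l').
  split => //; exists b, l'; split => //; split; [by rewrite -e1 | by rewrite -e2].
have /Tr1 [f1 f2 S] := (Tr_htp _ _ (Hpi o _ hl) P Q).1 H.
case: P eP f1 S {H e2} => a x /= eP f1.
case: Q eQ f2 {e1} => b' y /= eQ f2.
subst a b'.
move=> [z [[h1 E1] [h2 E2]]]; simpl in E1, E2.
by rewrite j_id in E1; rewrite j_id in E2; subst.
Qed.

Lemma Tr_ex l b : chain (b :: l) -> forall P, projT1 P = s1_d1 (last b l) ->
  exists Q, Tr (b :: l) P Q.
Proof.
elim: l b => [|b' l IH] b /=.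
  move=> _ P e; have [Q HQ] := St_ex e; exists Q; by exists P.
move=> [e hc] P eP.
have [M HM] := IH b' hc P eP.
have [_ [eM _]] := Tr_path HM.
have eM' : projT1 M = s1_d1 b by rewrite eM e.
have [Q HQ] := St_ex eM'; exists Q; by exists M.
Qed.

Lemma Tr_along l P Q P' : Tr l P Q -> projT1 P' = projT1 P ->
  exists Q', projT1 Q' = projT1 Q /\ Tr l P' Q'.
Proof.
move=> H e; have := Tr_path H; case: l H => [|b l'] H.
  by move=> <-; exists P'.
move=> [hc [e1 e2]].
have [Q' HQ'] := Tr_ex _ _ hc P' (etrans e e2).
have [_ [e3 _]] := Tr_path HQ'.
exists Q'; split => //; by rewrite e1 e3.
Qed.

Lemma Tr_op (F : forall a, A a -> A a -> A a)
  (HF : forall a o (h : (a <= o)%O) x y, j h (F a x y) = F o (j h x) (j h y)) l :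
  forall a x x' b y y', Tr l (existT A a x) (existT A b y) ->
  Tr l (existT A a x') (existT A b y') ->
  Tr l (existT A a (F a x x')) (existT A b (F b y y')).
Proof.
elim: l => [|b0 l IH] a x x' b y y' /=.
  move=> E1 E2; have eab := f_equal (@projT1 K A) E1; simpl in eab; subst b.
  by rewrite (eqS E1) (eqS E2).
move=> [[m z] [H1 [e1 e2 S1]]] [[m' z'] [H2 [e3 e4 S2]]].
simpl in e1, e2, e3, e4; subst m m' b.
exists (existT A (s1_d1 b0) (F _ z z')); split; first exact: IH.
split => //.
case: S1 => w [[h1 E1] [h2 E2]]; case: S2 => w' [[h3 E3] [h4 E4]].
simpl in h1, h2, h3, h4, E1, E2, E3, E4.
exists (F _ w w'); split.
  exists h1; rewrite /= HF E1 -E3; by rewrite (bool_irrelevance h3 h1).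
exists h2; rewrite /= HF E2 -E4; by rewrite (bool_irrelevance h4 h2).
Qed.

End Main.

Section Main2.
Context (R : realType) (d : Order.disp_t) (K : porderType d) (N : net_bundle R K).
Context (o0 : K) (Hpc : pathwise_connected K) (Hpi : forall o : K, pi1_trivial o).
Local Notation A := (nb_alg N).
Local Notation j := (@nb_j _ _ _ N _ _).
Local Notation Tr := (@Tr _ _ _ N).
Local Notation SS := (@SS _ _ _ N).

Definition Rel (P Q : SS) := exists l, Tr l P Q.

Lemma Rel_trans {P M Q} : Rel P M -> Rel M Q -> Rel P Q.
Proof. move=> [l1 H1] [l2 H2]; exists (l2 ++ l1); apply/Tr_cat; by exists M. Qed.

Lemma Rel_sym {P Q} : Rel P Q -> Rel Q P.
Proof. move=> [l H]; exists (rev (map (flip (K:=K)) l)); exact: Tr_rev. Qed.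

Lemma Rel_ex (P : SS) o : exists Q : SS, projT1 Q = o /\ Rel P Q.
Proof.
have [l [hc [b [l' [el [e0 e1]]]]]] := Hpc (projT1 P) o; subst l.
have [Q HQ] := Tr_ex _ _ hc P (esym e1).
have [_ [eQ _]] := Tr_path HQ.
exists Q; split; [by rewrite eQ | by exists (b :: l')].
Qed.

Lemma Rel_uniq {P Q : SS} : Rel P Q -> projT1 P = projT1 Q -> P = Q.
Proof. move=> [l H] e; exact: (Tr_loop Hpi _ _ _ _ H e erefl). Qed.

Lemma phi_ex {o} (x : A o) : exists y : A o0, Rel (existT A o x) (existT A o0 y).
Proof.
have [[a y] [/= e H]] := Rel_ex (existT A o x) o0; subst a; by exists y.
Qed.

Definition phi {o} (x : A o) : A o0 :=
  proj1_sig (constructive_indefinite_description _ (phi_ex x)).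

Lemma phi_spec {o} (x : A o) : Rel (existT A o x) (existT A o0 (phi x)).
Proof. exact: (proj2_sig (constructive_indefinite_description _ (phi_ex x))). Qed.

Lemma phi_eq {o} (x : A o) {y} : Rel (existT A o x) (existT A o0 y) -> y = phi x.
Proof.
move=> H; apply: eqS; apply: Rel_uniq => //.
exact: Rel_trans (Rel_sym H) (phi_spec x).
Qed.

Lemma phi_op (F : forall a, A a -> A a -> A a)
  (HF : forall a o (h : (a <= o)%O) x y, j h (F a x y) = F o (j h x) (j h y))
  o (x x' : A o) : phi (F o x x') = F o0 (phi x) (phi x').
Proof.
have [l Hl] := phi_spec x.
have [[a y''] [/= ea H']] := Tr_along _ _ _ (existT A o x') Hl erefl.
subst a.
have -> : phi x' = y'' by symmetry; apply: phi_eq; exists l.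
symmetry; apply: phi_eq; exists l; exact: Tr_op.
Qed.

Lemma phi_inj o : injective (@phi o).
Proof.
move=> x x' E; apply: eqS; apply: Rel_uniq => //.
apply: Rel_trans (phi_spec x) _; rewrite E; exact: Rel_sym (phi_spec x').
Qed.

Lemma phi_surj o (y : A o0) : exists x : A o, phi x = y.
Proof.
have [[a x] [/= e H]] := Rel_ex (existT A o0 y) o; subst a.
exists x; symmetry; apply: phi_eq; exact: Rel_sym.
Qed.

Lemma j_hom {a o : K} (h : (a <= o)%O) : star_hom (j h).
Proof. by case: (nb_iso N h). Qed.

Lemma phi_iso o : star_iso (@phi o).
Proof.
split.
  split.
  - move=> x y; apply: (phi_op (fun b (x y : A b) => x + y)) => a o' h x' y'.
    by case: (j_hom h).
  - move=> c x.
    have HF : forall a o' (h : (a <= o')%O) (x' y' : A a),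
        j h ((fun b (x y : A b) => c *: x) a x' y') = (fun b (x y : A b) => c *: x) o' (j h x') (j h y').
      by move=> a o' h x' y'; case: (j_hom h).
    exact: (phi_op _ HF o x x).
  - move=> x y; apply: (phi_op (fun b (x y : A b) => cs_mul x y)) => a o' h x' y'.
    by case: (j_hom h).
  - have HF : forall a o' (h : (a <= o')%O) (x' y' : A a),
        j h ((fun b (x y : A b) => cs_one (A b)) a x' y') = (fun b (x y : A b) => cs_one (A b)) o' (j h x') (j h y').
      by move=> a o' h x' y'; case: (j_hom h).
    exact: (phi_op _ HF o (cs_one _) (cs_one _)).
  - move=> x.
    have HF : forall a o' (h : (a <= o')%O) (x' y' : A a),
        j h ((fun b (x y : A b) => cs_star x) a x' y') = (fun b (x y : A b) => cs_star x) o' (j h x') (j h y').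
      by move=> a o' h x' y'; case: (j_hom h).
    exact: (phi_op _ HF o x x).
exists (fun y => proj1_sig (constructive_indefinite_description _ (phi_surj o y))).
  move=> x; apply: phi_inj.
  exact: (proj2_sig (constructive_indefinite_description _ (phi_surj o (phi x)))).
move=> y; exact: (proj2_sig (constructive_indefinite_description _ (phi_surj o y))).
Qed.

Lemma phi_compat (a o : K) (h : (a <= o)%O) (x : A a) : phi (j h x) = phi x.
Proof.
symmetry; apply: phi_eq.
apply: Rel_trans (phi_spec x).
apply: Rel_sym; exists [:: @Simplex1 _ K o a o (lexx o) h].
apply/Tr1; split => //.
exists (j h x); split; first by exists h.
by exists (lexx o); rewrite /= j_id.
Qed.

End Main2.

Theorem corollary3p9 (R : realType) (d : Order.disp_t) (K : porderType d) :
  simply_connected K -> forall N : net_bundle R K, trivial_bundle N.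
Proof.
move=> [Hpc Hpi] N.
case: (classic (exists o : K, True)) => [[o0 _] | Hno].
  exists (nb_alg N o0), (fun o (x : nb_alg N o) => phi R d K N o0 Hpc x); split.
    move=> o; exact: phi_iso.
  move=> a o h x; exact: phi_compat.
exists (zeroCS R), (fun o _ => match Hno (ex_intro _ o I) with end); split.
  by move=> o; exfalso; apply: Hno; exists o.
by move=> a o; exfalso; apply: Hno; exists o.
Qed.
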